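(* Let $0\le k,\ell<p+1$, $0\le r<p^2-1$ and $\lambda\in\overline{\mathbb{F}}_p^\times$. Then $\varphi_{k,\ell}$ is equivalent to $\psi_{r,\lambda}$ (conjugate by an element of $\mathrm{GL}_2(\overline{\mathbb{F}}_p)$) if and only if $k=\ell$, $r\equiv(1-p)k\pmod{p^2-1}$ and $\lambda=-1$.
   Context: $p$ odd prime; $\mathcal{G}_F=\mathrm{Gal}(\overline{\mathbb{Q}}_p/F)$, $\mathbb{Q}_{p^2}$ unramified quadratic; $\mathrm{Fr}_p\in\mathcal{G}_{\mathbb{Q}_p}$ a fixed geometric Frobenius lift. $\omega_2$: character of $\mathcal{G}_{\mathbb{Q}_{p^2}}$, on inertia $h\mapsto$ reduction of $h(\sqrt[p^2-1]{p})/\sqrt[p^2-1]{p}$, with $\omega_2(\mathrm{Fr}_p^2)=1$; $\mu_{2,\lambda}$ unramified with $\mathrm{Fr}_p^2\mapsto\lambda$. ${}^LG=\mathrm{GL}_2(\overline{\mathbb{F}}_p)\rtimes\mathcal{G}_{\mathbb{Q}_p}$ with $\mathcal{G}_{\mathbb{Q}_{p^2}}$ acting trivially and $\mathrm{Fr}_pg\mathrm{Fr}_p^{-1}=\Phi_2(g^\top)^{-1}\Phi_2^{-1}$, $\Phi_2=\begin{pmatrix}0&1\\-1&0\end{pmatrix}$. $\varphi_{k,\ell}$: $\mathrm{Fr}_p\mapsto\begin{pmatrix}0&-1\\1&0\end{pmatrix}\mathrm{Fr}_p$, $h\mapsto\mathrm{diag}\big(\mu_{2,-1}\omega_2^{(1-p)k}(h),\mu_{2,-1}\omega_2^{(1-p)\ell}(h)\big)h$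 ($h\in\mathcal{G}_{\mathbb{Q}_{p^2}}$). $\psi_{r,\lambda}$: $\mathrm{Fr}_p\mapsto\mathrm{diag}(1,\lambda)\mathrm{Fr}_p$, $h\mapsto\mathrm{diag}\big(\mu_{2,\lambda^{-1}}\omega_2^{r}(h),\mu_{2,\lambda}\omega_2^{-pr}(h)\big)h$. *)

(* Defs.v *)
From HB Require Import structures.
From mathcomp Require Import all_boot all_order all_algebra.
From mathcomp Require Import monoid.
Set Implicit Arguments. Unset Strict Implicit. Unset Printing Implicit Defensive.
Import Order.TTheory GRing.Theory Num.Theory.
Local Open Scope ring_scope.

(* The L-group  ^L G = GL_2(F) x| G_{Q_p}.  A parameter G_{Q_p} -> ^L G of
   the shape considered in the paper is given by
     - its values  h |-> A(h) . h   on  h in G_{Q_{p^2}}  (onH), and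
     - its value   Fr_p |-> M . Fr_p                    (atFr).
   Since G_{Q_p} = G_{Q_{p^2}} |_| G_{Q_{p^2}} Fr_p, these data determine it. *)
Record Lparam (F : fieldType) (H : Type) := mkLparam {
  onH : H -> 'M[F]_2 ;
  atFr : 'M[F]_2 }.

Definition Phi2 {F : fieldType} : 'M[F]_2 :=
  \matrix_(i < 2, j < 2)
    (if (val i == 0%N) && (val j == 1%N) then 1
     else if (val i == 1%N) && (val j == 0%N) then -1 else 0).

(* the action of Fr_p on GL_2 :  Fr_p g Fr_p^{-1} = Phi_2 (g^T)^{-1} Phi_2^{-1} *)
Definition frob_act {F : fieldType} (g : 'M[F]_2) : 'M[F]_2 :=
  Phi2 *m invmx (g^T) *m invmx Phi2.

(* Conjugation by g in GL_2(F) inside ^L G: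
     g (A h) g^{-1}   = (g A g^{-1}) h               (h acts trivially)
     g (M Fr) g^{-1}  = (g M (Fr g^{-1} Fr^{-1})) Fr.
   Two parameters are equivalent iff some g in GL_2(F) conjugates one to the
   other; agreement on G_{Q_{p^2}} and on Fr_p is agreement on all of
   G_{Q_p}, as conjugation is a group automorphism of ^L G. *)
Definition Lequiv (F : fieldType) (H : Type) (phi psi : Lparam F H) : Prop :=
  exists g : 'M[F]_2, g \in unitmx /\
    (forall h, g *m onH phi h *m invmx g = onH psi h) /\
    g *m atFr phi *m frob_act (invmx g) = atFr psi.

Definition diag2 {F : fieldType} (a b : F) : 'M[F]_2 :=
  \matrix_(i < 2, j < 2) (if i == j then (if val i == 0%N then a else b) else 0).

Definition J2 {F : fieldType} : 'M[F]_2 :=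
  \matrix_(i < 2, j < 2)
    (if (val i == 0%N) && (val j == 1%N) then -1
     else if (val i == 1%N) && (val j == 0%N) then 1 else 0).

Definition is_character (F : fieldType) (G : groupType) (chi : G -> F) : Prop :=
  chi 1%g = 1 /\ forall x y : G, chi (x * y)%g = chi x * chi y.

Definition phi_kl (F : fieldType) (G : groupType) (p : nat)
    (om2 : G -> F) (mu2 : F -> G -> F) (k l : nat) : Lparam F G :=
  mkLparam (fun h => diag2 (mu2 (-1) h * om2 h ^ ((1 - (p%:Z)) * k%:Z)%R)
                           (mu2 (-1) h * om2 h ^ ((1 - (p%:Z)) * l%:Z)%R))
           J2.

Definition psi_rl (F : fieldType) (G : groupType) (p : nat)
    (om2 : G -> F) (mu2 : F -> G -> F) (r : nat) (lam : F) : Lparam F G :=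
  mkLparam (fun h => diag2 (mu2 lam^-1 h * om2 h ^ (r%:Z))
                           (mu2 lam h * om2 h ^ (- ((p * r)%N%:Z))%R))
           (diag2 1 lam).

(* Main.v *)
Require Import Defs.
From HB Require Import structures.
From mathcomp Require Import all_boot all_order all_algebra.
From mathcomp Require Import ring zify.
From mathcomp Require Import cyclic separable cyclotomic.
Import Order.TTheory GRing.Theory Num.Theory.
Local Open Scope ring_scope.
Lemma o2_0 (i : 'I_2) : val i = 0%N -> i = 0. Proof. by move=> H; apply: val_inj. Qed.
Lemma o2_1 (i : 'I_2) : val i = 1%N -> i = 1. Proof. by move=> H; apply: val_inj. Qed.

Ltac norm2 := repeat match goal with
 | |- context [?i] =>
   lazymatch type of i with
   | ordinal 2 =>
     lazymatch i with
     | @GRing.zero _ => fail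
     | @GRing.one _ => fail
     | _ => first [ rewrite (@o2_0 i); last by [] | rewrite (@o2_1 i); last by [] ]
     end
   end
 end.


Section S.
Variable F : fieldType.

Lemma det2 (A : 'M[F]_2) : \det A = A 0 0 * A 1 1 - A 0 1 * A 1 0.
Proof.
rewrite (expand_det_row _ ord0) !big_ord_recr big_ord0 /= add0r /cofactor.
rewrite !det_mx11 !mxE /=. norm2. rewrite expr0 expr1. ring.
Qed.

Lemma mx2P (A B : 'M[F]_2) : A 0 0 = B 0 0 -> A 0 1 = B 0 1 ->
  A 1 0 = B 1 0 -> A 1 1 = B 1 1 -> A = B.
Proof.
move=> h1 h2 h3 h4; apply/matrixP => i j.
case: i => [[|[|i]] Hi]; case: j => [[|[|j]] Hj] //; norm2 => //.
Qed.

Lemma mul2E (A B : 'M[F]_2) i j : (A *m B) i j = A i 0 * B 0 j + A i 1 * B 1 j.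
Proof. rewrite !mxE !big_ord_recr big_ord0 /= add0r. norm2. by []. Qed.

Lemma tr2 (A : 'M[F]_2) : \tr A = A 0 0 + A 1 1.
Proof. rewrite /mxtrace !big_ord_recr big_ord0 /= add0r. norm2. by []. Qed.

Lemma invPhi2 : invmx (@Phi2 F) = J2.
Proof.
have H : (@Phi2 F) *m J2 = 1%:M.
  apply: mx2P; rewrite mul2E !mxE /=; ring.
have [U _] := mulmx1_unit H.
by rewrite -[RHS](mulKmx U) H mulmx1.
Qed.

Lemma frob_inv (g : 'M[F]_2) : g \in unitmx ->
  frob_act (invmx g) = \det g *: invmx g.
Proof.
move=> U; rewrite /frob_act -trmx_inv invmxK invPhi2.
have H : Phi2 *m g^T *m J2 *m g = (\det g)%:M.
  rewrite det2; apply: mx2P; rewrite !mul2E !mxE /=; ring.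
by rewrite -mul_scalar_mx -H mulmxK.
Qed.

Lemma diag_conj (g : 'M[F]_2) a b c d : g \in unitmx ->
  g *m diag2 a b *m invmx g = diag2 c d ->
  (a = c /\ b = d) \/ (b = c /\ a = d).
Proof.
move=> U H.
have H2 : g *m diag2 a b = diag2 c d *m g by rewrite -H mulmxKV.
have E i j : (g *m diag2 a b) i j = (diag2 c d *m g) i j by rewrite H2.
have e1 := E 0 0; have e2 := E 0 1; have e3 := E 1 0; have e4 := E 1 1.
rewrite !mul2E !mxE /= in e1 e2 e3 e4.
rewrite !mul0r !mulr0 !addr0 !add0r in e1 e2 e3 e4.
move: U; rewrite unitmxE unitfE det2 => D.
have [h00|h00] := eqVneq (g 0 0) 0.
  right; rewrite h00 mul0r sub0r oppr_eq0 mulf_eq0 negb_or in D.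
  case/andP: D => D1 D2; split.
    by apply: (mulfI D1); rewrite e2 mulrC.
  by apply: (mulfI D2); rewrite e3 mulrC.
have [h11|h11] := eqVneq (g 1 1) 0.
  right; rewrite h11 mulr0 sub0r oppr_eq0 mulf_eq0 negb_or in D.
  case/andP: D => D1 D2; split.
    by apply: (mulfI D1); rewrite e2 mulrC.
  by apply: (mulfI D2); rewrite e3 mulrC.
left; split.
  by apply: (mulfI h00); rewrite e1 mulrC.
by apply: (mulfI h11); rewrite e4 mulrC.
Qed.

End S.
Lemma pow_mod (F : fieldType) (z : F) (n : nat) (d : int) :
  (0 < n)%N -> z ^+ n = 1 -> z ^ d = z ^+ `|(d %% n%:Z)%Z|%N.
Proof.
move=> n0 zn.
have z0 : z != 0.
  by apply/negP => /eqP z0; move: zn; rewrite z0 expr0n; case: n n0 => // n _ /eqP; rewrite eq_sym oner_eq0.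
have nz : n%:Z != 0 by rewrite eqz_nat -lt0n.
rewrite {1}(divz_eq d n%:Z) expfzDr // -exprz_exp exprzAC.
rewrite (_ : z ^ n%:Z = 1) // exp1rz mul1r.
have E : ((`|(d %% n)%Z|%N)%:Z = (d %% n)%Z) by rewrite gez0_abs // modz_ge0.
by rewrite -{1}E.
Qed.

Lemma prim_exp (F : fieldType) (z : F) (n : nat) (a b : int) :
  (0 < n)%N -> n.-primitive_root z -> z ^ a = z ^ b -> (a = b %[mod n%:Z])%Z.
Proof.
move=> n0 pz.
have zn : z ^+ n = 1 by apply/eqP; rewrite -(prim_order_dvd pz).
rewrite (@pow_mod _ _ _ a n0 zn) (@pow_mod _ _ _ b n0 zn) => /eqP.
rewrite (eq_prim_root_expr pz) => /eqP.
have nz : n%:Z != 0 by rewrite eqz_nat -lt0n.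
have lt c : (`|(c %% n%:Z)%Z| < n)%N.
  by rewrite -ltz_nat gez0_abs ?modz_ge0 //; have := ltz_mod c nz.
rewrite !modn_small ?lt //.
move=> H. by rewrite -[(a %% _)%Z]gez0_abs ?modz_ge0 // -[(b %% _)%Z]gez0_abs ?modz_ge0 // H.
Qed.

Lemma prim_exists (F : closedFieldType) (n : nat) :
  (0 < n)%N -> n%:R != 0 :> F -> exists z : F, n.-primitive_root z.
Proof.
move=> n0 nF.
have [rs Hrs] := closed_field_poly_normal ('X^n - 1 : {poly F}).
have mon : ('X^n - 1 : {poly F}) \is monic by rewrite -polyC1 monicXnsubC.
rewrite (monicP mon) scale1r in Hrs.
have sep := separable_Xn_sub_1 nF.
rewrite Hrs separable_prod_XsubC in sep.
have sz : size rs = n.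
  have := size_XnsubC (1 : F) n0; rewrite polyC1 Hrs size_prod_XsubC.
  by case.
have all1 : all n.-unity_root rs.
  apply/allP => x xr; rewrite /root_of_unity Hrs.
  by rewrite root_prod_XsubC.
have := has_prim_root n0 all1 sep; rewrite sz leqnn => /(_ isT) /hasP [z _ pz].
by exists z.
Qed.
Lemma modE (a b d : int) : (a = b %[mod d])%Z <-> exists q, a = b + q * d.
Proof.
split.
  move/eqP; rewrite eqz_mod_dvd => /dvdzP [q Hq]; exists q; rewrite -Hq; ring.
move=> [q ->]; apply/eqP; rewrite eqz_mod_dvd; apply/dvdzP; exists q; ring.
Qed.

Lemma nE (p : nat) : (0 < p)%N -> ((p ^ 2 - 1)%N%:Z = p%:Z * p%:Z - 1).
Proof. move=> p0; rewrite -subzn; last by rewrite expn_gt0 p0. by rewrite expnS expn1 PoszM. Qed.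

Lemma arith_fwd (p k l r : nat) : (1 < p)%N -> (k < p.+1)%N -> (l < p.+1)%N ->
  ((1 - p%:Z) * k%:Z = r%:Z %[mod (p ^ 2 - 1)%N%:Z])%Z ->
  ((1 - p%:Z) * l%:Z = - ((p * r)%N%:Z) %[mod (p ^ 2 - 1)%N%:Z])%Z -> k = l.
Proof.
move=> p1 hk hl /modE [q1 H1] /modE [q2 H2].
rewrite nE in H1 H2; last by lia.
rewrite PoszM in H2.
have Hr : r%:Z = (1 - p%:Z) * k%:Z - q1 * (p%:Z * p%:Z - 1) by rewrite H1; ring.
rewrite Hr in H2.
have E : (p%:Z - 1) * (k%:Z - l%:Z) = (p%:Z - 1) * ((k%:Z + p%:Z * q1 + q2) * (p%:Z + 1)).
  rewrite (_ : (p%:Z - 1) * (k%:Z - l%:Z) = (p%:Z - 1) * k%:Z + (1 - p%:Z) * l%:Z); last by ring.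
  rewrite H2; ring.
have p10 : p%:Z - 1 != 0 by rewrite subr_eq0; apply/eqP; lia.
have {E} E := mulfI p10 E.
set Q := (k%:Z + p%:Z * q1 + q2) in E.
have : k%:Z = l%:Z.
  have [Q0|Q0|Q0] := ltgtP Q 0; try nia.

by case.
Qed.

Lemma arith_bwd (p k r : nat) : (0 < p)%N ->
  (r%:Z = (1 - p%:Z) * k%:Z %[mod (p ^ 2 - 1)%N%:Z])%Z ->
  (- ((p * r)%N%:Z) = (1 - p%:Z) * k%:Z %[mod (p ^ 2 - 1)%N%:Z])%Z.
Proof.
move=> p0 /modE [q H]; apply/modE; exists (k%:Z - p%:Z * q).
rewrite nE // in H *; rewrite PoszM H; ring.
Qed.

Definition mk2 {F : fieldType} (a b c d : F) : 'M[F]_2 :=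
  \matrix_(i < 2, j < 2) (if val i == 0%N then (if val j == 0%N then a else b)
                           else (if val j == 0%N then c else d)).

Theorem lemma6p23
  (p : nat) (Hp : prime p) (Hodd : odd p)
  (F : closedFieldType) (HcharF : p \in [pchar F])
  (Halg : forall x : F, x != 0 -> exists n : nat, (0 < n)%N /\ x ^+ n = 1)
  (G : groupType) (Inert : pred G) (frob2 : G)
  (om2 : G -> F) (mu2 : F -> G -> F)
  (Hom2_char : is_character om2)
  (Hom2_frob : om2 frob2 = 1)
  (Hom2_val : forall h : G, om2 h ^+ (p ^ 2 - 1) = 1)
  (Hom2_inert : forall z : F, z ^+ (p ^ 2 - 1) = 1 ->
                  exists t : G, t \in Inert /\ om2 t = z)
  (Hmu_char : forall lam : F, lam != 0 -> is_character (mu2 lam))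
  (Hmu_unr : forall lam : F, lam != 0 -> forall t : G, t \in Inert -> mu2 lam t = 1)
  (Hmu_frob : forall lam : F, lam != 0 -> mu2 lam frob2 = lam)
  (k l r : nat) (lam : F)
  (Hk : (k < p.+1)%N) (Hl : (l < p.+1)%N) (Hr : (r < p ^ 2 - 1)%N)
  (Hlam : lam != 0) :
  Lequiv (phi_kl p om2 mu2 k l) (psi_rl p om2 mu2 r lam) <->
  [/\ k = l,
      (r%:Z = (1 - p%:Z) * k%:Z %[mod (p ^ 2 - 1)%N%:Z])%Z
    & lam = -1].
Proof.
have p1 := prime_gt1 Hp.
have n0 : (0 < p ^ 2 - 1)%N by rewrite subn_gt0 -{1}(expn0 p) ltn_exp2l.
have m10 : (-1 : F) != 0 by rewrite oppr_eq0 oner_eq0.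
split.
- move=> [g [U [Hh Hfr]]]; rewrite /= in Hh Hfr.
  have Hlam1 : lam = -1.
    have T := congr1 mxtrace Hfr.
    rewrite (@frob_inv _ _ U) -scalemxAr mxtraceZ mxtrace_mulC mulKmx // !tr2 !mxE /= in T.
    move: T; rewrite !addr0 mulr0 => /esym/eqP; rewrite addrC addr_eq0 => /eqP.
    by [].
  have nF : (p ^ 2 - 1)%:R != 0 :> F.
    by rewrite natrB ?expn_gt0 ?(ltnW p1) // natrX (pcharf0 HcharF) expr0n /= sub0r.
  have [z pz] := @prim_exists F _ n0 nF.
  have zn : z ^+ (p ^ 2 - 1) = 1 by apply/eqP; rewrite -(prim_order_dvd pz).
  have [t [tI omt]] := Hom2_inert z zn.
  have mu1 := Hmu_unr (-1) m10 t tI.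
  have mu2' := Hmu_unr lam^-1 (invr_neq0 Hlam) t tI.
  have mu3 := Hmu_unr lam Hlam t tI.
  have := @diag_conj _ _ _ _ _ _ U (Hh t); rewrite mu1 mu2' mu3 !mul1r omt.
  case=> [[E1 E2]|[E1 E2]].
    have M1 := @prim_exp _ _ _ _ _ n0 pz E1; have M2 := @prim_exp _ _ _ _ _ n0 pz E2.
    have kl := @arith_fwd _ _ _ _ p1 Hk Hl M1 M2.
    by split=> //.
  have M1 := @prim_exp _ _ _ _ _ n0 pz E1; have M2 := @prim_exp _ _ _ _ _ n0 pz E2.
  have lk := @arith_fwd _ _ _ _ p1 Hl Hk M1 M2.
  by subst l; split.
- move=> [kl Hr' ->]; subst l.
  have two0 : (2 : F) != 0.
    apply/negP => /eqP H2.
    have : (p %| 2)%N by rewrite (dvdn_pcharf HcharF); apply/eqP.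
    move/(@dvdn_leq _ 2 isT) => hp2.
    have p2 : p = 2%N by apply/eqP; rewrite eqn_leq hp2 p1.
    by rewrite p2 in Hodd.
  have [D HD] : exists D : F, D ^+ 2 = -1.
    have : size ('X^2 - (-1)%:P : {poly F}) != 1%N by rewrite size_XnsubC.
    move/closed_rootP => [x]; rewrite /root !hornerE => /eqP H.
    by exists x; apply/eqP; rewrite -subr_eq0 H.
  have D0 : D != 0 by apply/negP => /eqP D0; move: HD; rewrite D0 expr0n /= => /eqP; rewrite eq_sym oppr_eq0 oner_eq0.
  pose g := mk2 D 1 (- D / 2) (2^-1).
  have detg : \det g = D.
    rewrite det2 !mxE /=. field. exact: two0.
  have U : g \in unitmx by rewrite unitmxE detg unitfE.
  exists g; split; first exact: U.
  split.
    move=> h /=.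
    set a := mu2 (-1) h * om2 h ^ ((1 - p%:Z) * k%:Z).
    have hn : om2 h ^+ (p ^ 2 - 1) = 1 := Hom2_val h.
    have Ea : diag2 a a = a%:M.
      by apply: mx2P; rewrite !mxE.
    rewrite Ea scalar_mxC mulmxK //.
    rewrite invrN1 (@pow_mod _ _ _ r n0 hn) Hr' -(@pow_mod _ _ _ _ n0 hn).
    rewrite (@pow_mod _ _ _ (- _) n0 hn) (@arith_bwd _ _ _ (ltnW p1) Hr') -(@pow_mod _ _ _ _ n0 hn).
    by apply: mx2P; rewrite !mxE.
  rewrite /= (@frob_inv _ _ U) detg -scalemxAr scalemxAl.
  have K : D *: (g *m J2) = diag2 1 (-1) *m g.
    apply: mx2P; rewrite /g !mxE !big_ord_recr !big_ord0 /= !add0r; norm2; rewrite !mxE /=.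
    - ring.
    - by transitivity (- (D * D)); [ring | rewrite -expr2 HD; ring].
    - ring.
    - by transitivity ((D * D) / 2); [ring | rewrite -expr2 HD; ring].
  by rewrite K mulmxK.
Qed.
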